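(* Let $\mathcal{H}=(V,H,\bm{w})$ be a finite, connected, weighted undirected hypergraph in which every hyperedge has at least two vertices, and let $C\in\mathbb{R}$. Suppose $\kappa(u,v)\ge C$ for every well-transported pair $\{u,v\}$. Then $\kappa(x,y)\ge C$ for all distinct $x,y\in V$.
   Context: A weighted undirected hypergraph $\mathcal{H}=(V,H,\bm{w})$ has a finite vertex set $V$, a finite set $H$ of hyperedges (subsets of $V$), and positive weights $w_h>0$. Distinct vertices $u,v$ are adjacent ($u\sim v$) if some hyperedge contains both; $\Gamma(x)=\{z: z\sim x\}$; $\mathrm{Deg}(x)=\sum_{h\ni x}w_h$. A hyperpath connecting $u$ and $v$ is a sequence of hyperedges $h_1,\dots,h_l$ with $u\in h_1$, $v\in h_l$, $h_j\cap h_{j+1}\neq\emptyset$; $\mathcal{H}$ is connected if all pairs of distinct vertices are connected by hyperpaths. For $u\ne v$, $d(u,v)=\inf_\gamma\sum_{h\in\gamma}w_h$ over hyperpaths connecting $u,v$; $d(u,u)=0$. $W(\mu,\nu)=\inf_\pi\sum_{x,y}\pi(x,y)d(x,y)$ over couplings $\pi$ of probability measures $\mu,\nu$ on $V$. For $\alpha\in[0,1]$: $\mu_x^\alpha(x)=\alpha$, $\mu_x^\alpha(z)=(1-\alpha)\sum_{h'\ni x,z}\frac{1}{|h'|-1}\frac{w_{h'}}{\mathrm{Deg}(x)}$ for $z\in\Gamma(x)$, $0$ otherwise. For distinct $u,v$: $\kappa_\alpha(u,v)=1-W(\mu_u^\alpha,\mu_v^\alpha)/d(u,v)$, and the Lin–Lu–Yau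 curvature is $\kappa(u,v)=\lim_{\alpha\to1^-}\kappa_\alpha(u,v)/(1-\alpha)$ (this limit exists in $\mathbb{R}$). A pair $\{u,v\}$ of distinct vertices is well-transported if there is a hyperedge $h$ containing both $u$ and $v$ with $d(u,v)=w_h$. *)

(* Defs.v *)
From HB Require Import structures.
From mathcomp Require Import all_boot all_order all_algebra.
From mathcomp Require Import all_classical all_reals all_analysis.
Set Implicit Arguments. Unset Strict Implicit. Unset Printing Implicit Defensive.
Import Order.TTheory GRing.Theory Num.Theory.
Import numFieldNormedType.Exports.
Local Open Scope classical_set_scope.
Local Open Scope ring_scope.

(* A weighted hypergraph: vertex set = finType V, hyperedge set H : {set {set V}},
   weights w : {set V} -> R (only values on H matter). *)

Definition adj (V : finType) (H : {set {set V}}) (u v : V) : bool :=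
  (u != v) && [exists h in H, (u \in h) && (v \in h)].

Definition Deg (R : realType) (V : finType) (H : {set {set V}}) (w : {set V} -> R)
  (x : V) : R := \sum_(h in H | x \in h) w h.

Definition hyperpath (V : finType) (H : {set {set V}}) (u v : V) (p : seq {set V}) : Prop :=
  [/\ p != [::], all (fun h => h \in H) p,
      u \in head finset.set0 p, v \in last finset.set0 p &
      forall i, (i.+1 < size p)%N -> nth finset.set0 p i :&: nth finset.set0 p i.+1 != finset.set0].

Definition hconnected (V : finType) (H : {set {set V}}) : Prop :=
  forall u v : V, u != v -> exists p, hyperpath H u v p.

Definition hdist (R : realType) (V : finType) (H : {set {set V}}) (w : {set V} -> R)
  (u v : V) : R :=
  if u == v then 0
  else inf [set r : R | exists p, hyperpath H u v p /\ r = \sum_(h <- p) w h].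

Definition coupling (R : realType) (V : finType) (mu nu : V -> R) (pi : V -> V -> R) : Prop :=
  [/\ forall x y, 0 <= pi x y,
      forall x, \sum_(y : V) pi x y = mu x &
      forall y, \sum_(x : V) pi x y = nu y].

Definition wass (R : realType) (V : finType) (H : {set {set V}}) (w : {set V} -> R)
  (mu nu : V -> R) : R :=
  inf [set r : R | exists pi, coupling mu nu pi /\
         r = \sum_(x : V) \sum_(y : V) pi x y * hdist H w x y].

Definition mu_alpha (R : realType) (V : finType) (H : {set {set V}}) (w : {set V} -> R)
  (alpha : R) (x : V) : V -> R :=
  fun z => if z == x then alpha
           else if adj H x z then
             (1 - alpha) * \sum_(h in H | (x \in h) && (z \in h))
                (((#|h|.-1)%:R)^-1 * (w h / Deg H w x))
           else 0.

Definition kappa_alpha (R : realType) (V : finType) (H : {set {set V}}) (w : {set V} -> R)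
  (alpha : R) (u v : V) : R :=
  1 - wass H w (mu_alpha H w alpha u) (mu_alpha H w alpha v) / hdist H w u v.

Definition kappa (R : realType) (V : finType) (H : {set {set V}}) (w : {set V} -> R)
  (u v : V) : R :=
  let f : R -> R := fun alpha => kappa_alpha H w alpha u v / (1 - alpha) in
  lim (f @ (1 : R)^'-).

Definition well_transported (R : realType) (V : finType) (H : {set {set V}})
  (w : {set V} -> R) (u v : V) : Prop :=
  u != v /\ exists2 h, h \in H & [/\ u \in h, v \in h & hdist H w u v = w h].

(* Main.v *)
Require Import Defs.
From HB Require Import structures.
From mathcomp Require Import all_boot all_order all_algebra.
From mathcomp Require Import all_classical all_reals all_analysis.
From mathcomp Require Import ring lra.
Import Order.TTheory GRing.Theory Num.Theory.
Import numFieldNormedType.Exports.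
Local Open Scope classical_set_scope.
Local Open Scope ring_scope.

Section Dist.
Variables (R : realType) (V : finType) (H : {set {set V}}) (w : {set V} -> R).
Hypothesis wpos : forall h, h \in H -> 0 < w h.

Definition eh (a b : {set V}) := a :&: b != finset.set0.
Definition sw (p : seq {set V}) := \sum_(h <- p) w h.
Definition Spath (u v : V) := [set r : R | exists p, hyperpath H u v p /\ r = sw p].

Lemma hdistE u v : u != v -> hdist H w u v = inf (Spath u v).
Proof. by move=> /negbTE uv; rewrite /hdist uv. Qed.

Lemma hdist0 u : hdist H w u u = 0.
Proof. by rewrite /hdist eqxx. Qed.

Lemma hyperpathP u v h t : hyperpath H u v (h :: t) <->
  [/\ path eh h t, all (mem H) (h :: t), u \in h & v \in last h t].
Proof.
split.
  case=> _ aH uh vl adj; split => //.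
  apply/(pathP finset.set0) => i it; exact: (adj i).
case=> /(pathP finset.set0) pth aH uh vl; split => // i.
Qed.

Lemma hyperpath_cons {u v p} : hyperpath H u v p -> exists h t, p = h :: t.
Proof. by case: p => [[]|h t _]; [|exists h, t]. Qed.

Lemma sw_ge0 p : all (mem H) p -> 0 <= sw p.
Proof.
rewrite /sw; elim: p => [|h p IH]; first by rewrite big_nil.
by move=> /= /andP[hH aH]; rewrite big_cons addr_ge0 ?IH // ltW ?wpos.
Qed.

Lemma sw_gt0 h p : all (mem H) (h :: p) -> 0 < sw (h :: p).
Proof.
move=> /= /andP[hH aH]; rewrite /sw big_cons.
by apply: ltr_wpDr; [apply: sw_ge0 | apply: wpos].
Qed.

Lemma sw_cat p q : sw (p ++ q) = sw p + sw q.
Proof. by rewrite /sw big_cat. Qed.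

Lemma sw_sub s t : uniq s -> {subset s <= t} -> all (mem H) t -> sw s <= sw t.
Proof.
elim: s t => [|a s IH] t; first by move=> _ _ aH; rewrite /sw big_nil sw_ge0.
move=> /= /andP[ans us] sub aH.
have at_ : a \in t by apply: sub; rewrite inE eqxx.
rewrite /sw (perm_big _ (perm_to_rem at_)) !big_cons.
have aH' : all (mem H) (rem a t).
  by apply/allP => x /mem_rem xt; exact: (allP aH).
rewrite lerD2l; apply: IH => // x xs.
have xt : x \in t by apply: sub; rewrite inE xs orbT.
have xa : x != a by apply: contraNneq ans => <-.
move: xt; rewrite (perm_mem (perm_to_rem at_)) inE (negbTE xa) //.
Qed.

Lemma shorten_hp {u v p} : hyperpath H u v p ->
  exists q, [/\ hyperpath H u v q, uniq q & sw q <= sw p].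
Proof.
move=> hp; have [h [t pe]] := hyperpath_cons hp; subst p.
have [pth aH uh vl] := (hyperpathP u v h t).1 hp.
move: vl; case: (shortenP pth) => p' pth' up' sub vl.
exists (h :: p'); split => //.
  apply/(hyperpathP u v h p').2; split => //.
  apply/allP => x; rewrite inE => /orP[/eqP->|xp]; first exact: (allP aH) h (mem_head _ _).
  by apply: (allP aH); rewrite inE sub ?orbT.
apply: sw_sub => // x; rewrite !inE => /orP[->//|/sub ->]; by rewrite orbT.
Qed.


Lemma sw_set {q} : uniq q -> sw q = \sum_(h in [set x | x \in q]%SET) w h.
Proof. by move=> uq; rewrite /sw big_uniq //; apply: eq_bigl => x; rewrite inE. Qed.

Lemma Spath_lb u v : lbound (Spath u v) 0.
Proof. move=> r [p [[_ aH _ _ _] ->]]; exact: sw_ge0. Qed.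

Lemma hdist_attain u v : (exists p0, hyperpath H u v p0) -> u != v ->
  exists p, hyperpath H u v p /\ sw p = hdist H w u v.
Proof.
move=> [p0 hp0] uv; have [q0 [hq0 uq0 _]] := shorten_hp hp0.
pose P (E : {set {set V}}) : bool :=
  `[< exists q, [/\ hyperpath H u v q, uniq q & E = [set x | x \in q]%SET] >].
pose F (E : {set {set V}}) := \sum_(h in E) w h.
have P0 : P [set x | x \in q0]%SET by apply/asboolP; exists q0.
case: (Order.TotalTheory.arg_minP F P0) => E /asboolP [q [hq uq ->]] Emin.
exists q; split => //; rewrite hdistE //.
apply/eqP; rewrite eq_le; apply/andP; split; last first.
  by apply: (ge_inf (ex_intro _ 0 (Spath_lb u v))); exists q.
apply: lb_le_inf; first by exists (sw q0), q0.
move=> r [p [hp ->]]; have [q1 [hq1 uq1 le1]] := shorten_hp hp.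
apply: le_trans le1; rewrite (sw_set uq) (sw_set uq1); apply: Emin.
by apply/asboolP; exists q1.
Qed.


Lemma hyperpath_cat a b c p q : hyperpath H a b p -> hyperpath H b c q ->
  hyperpath H a c (p ++ q).
Proof.
move=> hp hq; have [h [t pe]] := hyperpath_cons hp; subst p.
have [h' [t' qe]] := hyperpath_cons hq; subst q.
have [p1 a1 u1 v1] := (hyperpathP a b h t).1 hp.
have [p2 a2 u2 v2] := (hyperpathP b c h' t').1 hq.
rewrite cat_cons; apply/(hyperpathP a c h (t ++ h' :: t')).2; split => //.
- rewrite cat_path p1 /= p2 andbT /eh; apply/set0Pn; exists b.
  by rewrite inE v1 u2.
- by rewrite -cat_cons all_cat a1 a2.
- by rewrite last_cat.
Qed.

Hypothesis hcon : hconnected H.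

Lemma hdist_att {u v} : u != v ->
  exists p, hyperpath H u v p /\ sw p = hdist H w u v.
Proof. by move=> uv; apply: hdist_attain => //; apply: hcon. Qed.

Lemma hdist_ge0 u v : 0 <= hdist H w u v.
Proof.
have [->|uv] := eqVneq u v; first by rewrite hdist0.
have [p [[_ aH _ _ _] <-]] := hdist_att uv; exact: sw_ge0.
Qed.

Lemma hdist_gt0 {u v} : u != v -> 0 < hdist H w u v.
Proof.
move=> uv; have [p [hp <-]] := hdist_att uv.
have [h [t pe]] := hyperpath_cons hp; subst p.
have [_ aH _ _] := (hyperpathP u v h t).1 hp; exact: sw_gt0.
Qed.

Lemma hdist_le_path u v p : u != v -> hyperpath H u v p -> hdist H w u v <= sw p.
Proof.
move=> uv hp; rewrite hdistE //.
by apply: (ge_inf (ex_intro _ 0 (Spath_lb u v))); exists p.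
Qed.

Lemma hdist_le_w u v h : u != v -> h \in H -> u \in h -> v \in h ->
  hdist H w u v <= w h.
Proof.
move=> uv hH uh vh; have -> : w h = sw [:: h] by rewrite /sw big_seq1.
apply: hdist_le_path => //; apply/(hyperpathP u v h [::]).2; split => //=.
by rewrite hH.
Qed.

Lemma hdist_tri a b c : hdist H w a c <= hdist H w a b + hdist H w b c.
Proof.
have [->|ac] := eqVneq a c; first by rewrite hdist0 addr_ge0 ?hdist_ge0.
have [<-|ab] := eqVneq a b; first by rewrite hdist0 add0r.
have [<-|bc] := eqVneq b c; first by rewrite hdist0 addr0.
have [p [hp <-]] := hdist_att ab; have [q [hq <-]] := hdist_att bc.
rewrite -sw_cat; apply: hdist_le_path => //; exact: hyperpath_cat hq.
Qed.


Definition cost (pi : V -> V -> R) := \sum_(x : V) \sum_(y : V) pi x y * hdist H w x y.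
Definition Wset (mu nu : V -> R) :=
  [set r : R | exists pi, coupling mu nu pi /\ r = cost pi].
Definition prob (mu : V -> R) := (forall x, 0 <= mu x) /\ \sum_(x : V) mu x = 1.

Lemma wassE mu nu : wass H w mu nu = inf (Wset mu nu).
Proof. by []. Qed.

Lemma cost_ge0 mu nu pi : coupling mu nu pi -> 0 <= cost pi.
Proof.
case=> pi0 _ _; apply: sumr_ge0 => x _; apply: sumr_ge0 => y _.
by rewrite mulr_ge0 ?hdist_ge0.
Qed.

Lemma Wset_lb mu nu : has_lbound (Wset mu nu).
Proof. by exists 0 => r [pi [cp ->]]; exact: cost_ge0 cp. Qed.

Lemma Wset_ne {mu nu} : prob mu -> prob nu -> Wset mu nu !=set0.
Proof.
move=> [m0 m1] [n0 n1]; exists (cost (fun x y => mu x * nu y)).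
exists (fun x y => mu x * nu y); split => //; split.
- by move=> x y; rewrite mulr_ge0.
- by move=> x; rewrite -mulr_sumr n1 mulr1.
- by move=> y; rewrite -mulr_suml m1 mul1r.
Qed.

Lemma wass_le_cost {mu nu pi} : coupling mu nu pi -> wass H w mu nu <= cost pi.
Proof. by move=> cp; apply: (ge_inf (Wset_lb mu nu)); exists pi. Qed.

Lemma wass_ge mu nu b : prob mu -> prob nu ->
  (forall pi, coupling mu nu pi -> b <= cost pi) -> b <= wass H w mu nu.
Proof.
move=> pm pn hb; apply: lb_le_inf; first exact: Wset_ne.
by move=> r [pi [cp ->]]; apply: hb.
Qed.

Lemma wass_approx {mu nu e} : prob mu -> prob nu -> 0 < e ->
  exists pi, coupling mu nu pi /\ cost pi < wass H w mu nu + e.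
Proof.
move=> pm pn e0; have [r [pi [cp ->]] lt] := inf_adherent e0 (conj (Wset_ne pm pn) (Wset_lb mu nu)).
by exists pi.
Qed.


Definition glue (nu : V -> R) (p1 p2 : V -> V -> R) x z :=
  \sum_(y : V) p1 x y * (nu y)^-1 * p2 y z.

Lemma glue_coupling {mu nu rho p1 p2} : coupling mu nu p1 -> coupling nu rho p2 ->
  coupling mu rho (glue nu p1 p2) /\ cost (glue nu p1 p2) <= cost p1 + cost p2.
Proof.
move=> [p10 p1m p1n] [p20 p2m p2n].
have key1 x y : p1 x y * (nu y)^-1 * nu y = p1 x y.
  have [ny|ny] := eqVneq (nu y) 0; last by rewrite mulfVK.
  have := @psumr_eq0P _ _ predT (fun x => p1 x y) (fun i _ => p10 i y).
  by move=> /(_ _ x isT) ->; rewrite ?mul0r // p1n ny.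
have key2 y z : nu y * (nu y)^-1 * p2 y z = p2 y z.
  have [ny|ny] := eqVneq (nu y) 0; last by rewrite mulfV // mul1r.
  have := @psumr_eq0P _ _ predT (fun z => p2 y z) (fun i _ => p20 y i).
  by move=> /(_ _ z isT) ->; rewrite ?mulr0 // p2m ny.
have a0 x y z : 0 <= p1 x y * (nu y)^-1 * p2 y z.
  by rewrite !mulr_ge0 // invr_ge0 -(p1n y) sumr_ge0.
split; first split.
- by move=> x z; apply: sumr_ge0 => y _.
- move=> x; rewrite /glue exchange_big /= -p1m; apply: eq_bigr => y _.
  by rewrite -mulr_sumr p2m key1.
- move=> z; rewrite /glue exchange_big /= -p2n; apply: eq_bigr => y _.
  by rewrite -!mulr_suml p1n key2.
rewrite /cost /glue.
apply: (@le_trans _ _ (\sum_(x : V) \sum_(z : V) \sum_(y : V)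
   (p1 x y * (nu y)^-1 * p2 y z * hdist H w x y +
    p1 x y * (nu y)^-1 * p2 y z * hdist H w y z))).
  apply: ler_sum => x _; apply: ler_sum => z _; rewrite mulr_suml.
  apply: ler_sum => y _; rewrite -mulrDr; apply: ler_wpM2l => //.
  exact: hdist_tri.
rewrite le_eqVlt; apply/orP; left; apply/eqP.
under eq_bigr => x _ do under eq_bigr => z _ do rewrite big_split /=.
under eq_bigr => x _ do rewrite big_split /=.
rewrite big_split /=; congr (_ + _).
  apply: eq_bigr => x _; rewrite exchange_big /=; apply: eq_bigr => y _.
  by rewrite -mulr_suml -mulr_sumr p2m key1.
rewrite exchange_big /=.
under eq_bigr => z _ do rewrite exchange_big /=.
rewrite exchange_big /=; apply: eq_bigr => y _; apply: eq_bigr => z _.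
by rewrite -!mulr_suml p1n key2.
Qed.

Lemma wass_tri mu nu rho : prob mu -> prob nu -> prob rho ->
  wass H w mu rho <= wass H w mu nu + wass H w nu rho.
Proof.
move=> pm pn pr; apply/ler_addgt0Pr => e e0.
have e20 : 0 < e / 2 by rewrite divr_gt0.
have [p1 [c1 l1]] := wass_approx pm pn e20.
have [p2 [c2 l2]] := wass_approx pn pr e20.
have [cg lg] := glue_coupling c1 c2.
have := wass_le_cost cg.
lra.
Qed.


Lemma wass_convex mu nu mu1 nu1 mu2 nu2 t : 0 <= t -> t <= 1 ->
  prob mu1 -> prob nu1 -> prob mu2 -> prob nu2 ->
  (forall x, mu x = t * mu1 x + (1 - t) * mu2 x) ->
  (forall x, nu x = t * nu1 x + (1 - t) * nu2 x) ->
  wass H w mu nu <= t * wass H w mu1 nu1 + (1 - t) * wass H w mu2 nu2.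
Proof.
move=> t0 t1 pm1 pn1 pm2 pn2 emu enu; apply/ler_addgt0Pr => e e0.
have [p1 [[c10 c1m c1n] l1]] := wass_approx pm1 pn1 e0.
have [p2 [[c20 c2m c2n] l2]] := wass_approx pm2 pn2 e0.
have t1' : 0 <= 1 - t by rewrite subr_ge0.
pose pi x y := t * p1 x y + (1 - t) * p2 x y.
have cp : coupling mu nu pi.
  split.
  - by move=> x y; rewrite addr_ge0 // mulr_ge0.
  - by move=> x; rewrite emu big_split /= -!mulr_sumr c1m c2m.
  - by move=> y; rewrite enu big_split /= -!mulr_sumr c1n c2n.
have ec : cost pi = t * cost p1 + (1 - t) * cost p2.
  rewrite /cost !mulr_sumr -big_split; apply: eq_bigr => x _.
  rewrite !mulr_sumr -big_split; apply: eq_bigr => y _.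
  by rewrite /pi mulrDl !mulrA.
have h1 : t * cost p1 <= t * (wass H w mu1 nu1 + e) by rewrite ler_wpM2l // ltW.
have h2 : (1 - t) * cost p2 <= (1 - t) * (wass H w mu2 nu2 + e) by rewrite ler_wpM2l // ltW.
have := wass_le_cost cp; rewrite ec => h.
apply: (le_trans h); apply: (le_trans (lerD h1 h2)).
by rewrite !mulrDr addrACA -mulrDl subrKC mul1r.
Qed.

Lemma le_sum_term {F : V -> R} i : (forall j, 0 <= F j) -> F i <= \sum_(j : V) F j.
Proof.
move=> F0; rewrite (bigD1 i) //= ler_wpDr //; exact: sumr_ge0.
Qed.

Lemma sum_delta u : \sum_(x : V) ((x == u)%:R : R) = 1.
Proof.
rewrite (bigD1 u) //= eqxx big1 ?addr0 // => x /negbTE ->; by [].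
Qed.

Lemma prob_delta u : prob (fun x => (x == u)%:R).
Proof. by split; [move=> x; rewrite ler0n | exact: sum_delta]. Qed.

Lemma cost_dirac {u v pi} : coupling (fun x => (x == u)%:R) (fun y => (y == v)%:R) pi ->
  cost pi = hdist H w u v.
Proof.
move=> [p0 pm pn].
have z1 x y : x != u -> pi x y = 0.
  move=> xu; apply/eqP; rewrite eq_le p0 andbT.
  by apply: (le_trans (le_sum_term y (p0 x))); rewrite pm (negbTE xu).
have z2 x y : y != v -> pi x y = 0.
  move=> yv; apply/eqP; rewrite eq_le p0 andbT.
  by apply: (le_trans (le_sum_term x (p0^~ y))); rewrite pn (negbTE yv).
have puv : pi u v = 1.
  have := pm u; rewrite /= eqxx (bigD1 v) //= big1 ?addr0 // => y /z2; exact.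
rewrite /cost (bigD1 u) //=.
rewrite [X in _ + X](_ : _ = 0) ?addr0; last first.
  by apply: big1 => x xu; apply: big1 => y _; rewrite z1 // mul0r.
rewrite (bigD1 v) //= [X in _ + X](_ : _ = 0) ?addr0 ?puv ?mul1r //.
by apply: big1 => y yv; rewrite z2 // mul0r.
Qed.

Lemma wass_dirac u v : wass H w (fun x => (x == u)%:R) (fun y => (y == v)%:R) = hdist H w u v.
Proof.
apply/eqP; rewrite eq_le; apply/andP; split.
  have [r [pi [cp _]]] := Wset_ne (prob_delta u) (prob_delta v).
  by rewrite -(cost_dirac cp) wass_le_cost.
apply: wass_ge; try exact: prob_delta.
by move=> pi cp; rewrite (cost_dirac cp).
Qed.

Lemma cost_ge_pot mu nu pi u : coupling mu nu pi ->
  \sum_(y : V) nu y * hdist H w u y - \sum_(x : V) mu x * hdist H w u x <= cost pi.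
Proof.
move=> [p0 pm pn].
have -> : \sum_(y : V) nu y * hdist H w u y - \sum_(x : V) mu x * hdist H w u x =
   \sum_(x : V) \sum_(y : V) pi x y * (hdist H w u y - hdist H w u x).
  under [RHS]eq_bigr => x _ do under eq_bigr => y _ do rewrite mulrBr.
  under [RHS]eq_bigr => x _ do rewrite sumrB.
  rewrite sumrB; congr (_ - _).
    rewrite exchange_big /=; apply: eq_bigr => y _; by rewrite -pn mulr_suml.
  by apply: eq_bigr => x _; rewrite -pm mulr_suml.
apply: ler_sum => x _; apply: ler_sum => y _; apply: ler_wpM2l => //.
by rewrite lerBlDl hdist_tri.
Qed.


Definition cq (x z : V) : R := \sum_(h in H | (x \in h) && (z \in h))
                (((#|h|.-1)%:R)^-1 * (w h / Deg H w x)).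
Definition q (x z : V) : R := if z == x then 0 else if adj H x z then cq x z else 0.

Lemma mu_alphaE a x z : mu_alpha H w a x z = a * (z == x)%:R + (1 - a) * q x z.
Proof.
rewrite /mu_alpha /q; case: eqP => _; first by rewrite mulr1 mulr0 addr0.
by rewrite mulr0 add0r; case: ifP; rewrite ?mulr0.
Qed.

Lemma Deg_ge0 x : 0 <= Deg H w x.
Proof. by apply: sumr_ge0 => h /andP[hH _]; rewrite ltW ?wpos. Qed.

Lemma q_ge0 x z : 0 <= q x z.
Proof.
rewrite /q; case: eqP => // _; case: ifP => // _.
apply: sumr_ge0 => h /andP[hH _]; rewrite mulr_ge0 ?invr_ge0 ?ler0n //.
by rewrite divr_ge0 ?Deg_ge0 // ltW ?wpos.
Qed.

Hypothesis hsize : forall h, h \in H -> (2 <= #|h|)%N.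
Hypothesis vin : forall x : V, exists2 h, h \in H & x \in h.

Lemma Deg_gt0 x : 0 < Deg H w x.
Proof.
have [h hH xh] := vin x; rewrite /Deg (bigD1 h) /=; last by rewrite hH xh.
by rewrite ltr_wpDr ?wpos //; apply: sumr_ge0 => h' /andP[/andP[h'H _] _]; rewrite ltW ?wpos.
Qed.

Lemma sum_q x : \sum_(z : V) q x z = 1.
Proof.
have -> : \sum_(z : V) q x z = \sum_(z | z != x) cq x z.
  rewrite (bigD1 x) //= /q eqxx add0r; apply: eq_bigr => z zx.
  rewrite (negbTE zx); case: ifP => // nadj; symmetry; apply: big1 => h.
  move=> /andP[hH /andP[xh zh]]; move: nadj; rewrite /adj eq_sym zx /=.
  by move/negbT/negP => C; exfalso; apply: C; apply/existsP; exists h; rewrite hH xh zh.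
rewrite /cq (exchange_big_dep (fun h => (h \in H) && (x \in h))) /=; last first.
  by move=> z h _ /andP[-> /andP[-> _]].
rewrite (eq_bigr (fun h => w h / Deg H w x)); last first.
  move=> h /andP[hH xh].
  rewrite (eq_bigl (fun z => z \in h :\ x)); last first.
    by move=> z; rewrite !inE hH xh.
  rewrite sumr_const.
  have cd : #|h :\ x| = #|h|.-1 by rewrite (cardsD1 x h) xh.
  have c1 : (0 < #|h|.-1)%N by have := hsize h hH; case: #|h| => [|[|n]].
  rewrite cd -mulrnAl -mulr_natr mulVf ?mul1r //.
  by rewrite pnatr_eq0 -lt0n.
rewrite -mulr_suml mulfV //; apply: lt0r_neq0; exact: Deg_gt0.
Qed.

Lemma prob_mu a x : 0 <= a -> a <= 1 -> prob (mu_alpha H w a x).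
Proof.
move=> a0 a1; split.
  by move=> z; rewrite mu_alphaE addr_ge0 ?mulr_ge0 ?ler0n ?q_ge0 ?subr_ge0.
under eq_bigr => z _ do rewrite mu_alphaE.
rewrite big_split /= -!mulr_sumr sum_q.
rewrite (eq_bigr (fun z => (z == x)%:R)) ?sum_delta; last by [].
by rewrite !mulr1 addrC subrK.
Qed.

Lemma mu1 x z : mu_alpha H w 1 x z = (z == x)%:R.
Proof. by rewrite mu_alphaE subrr mul0r addr0 mul1r. Qed.


Definition gw (u v : V) (a : R) := wass H w (mu_alpha H w a u) (mu_alpha H w a v).
Definition fk (u v : V) : R -> R := fun a => kappa_alpha H w a u v / (1 - a).
Definition Kq (u : V) := \sum_(z : V) q u z * hdist H w u z.

Lemma kappaE u v : kappa H w u v = lim (fk u v @ (1 : R)^'-).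
Proof. by []. Qed.

Lemma gw1 u v : gw u v 1 = hdist H w u v.
Proof.
rewrite /gw.
have -> : mu_alpha H w 1 u = (fun z => (z == u)%:R) by apply/funext => z; rewrite mu1.
have -> : mu_alpha H w 1 v = (fun z => (z == v)%:R) by apply/funext => z; rewrite mu1.
exact: wass_dirac.
Qed.

Lemma gw_convex u v a b t : 0 <= a -> a <= 1 -> 0 <= b -> b <= 1 -> 0 <= t -> t <= 1 ->
  gw u v (t * a + (1 - t) * b) <= t * gw u v a + (1 - t) * gw u v b.
Proof.
move=> a0 a1 b0 b1 t0 t1; apply: wass_convex => //; try exact: prob_mu.
- by move=> x; rewrite !mu_alphaE; ring.
- by move=> x; rewrite !mu_alphaE; ring.
Qed.

Lemma gw_lb u v a : 0 <= a -> a <= 1 ->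
  a * hdist H w u v - (1 - a) * Kq u <= gw u v a.
Proof.
move=> a0 a1; apply: wass_ge; try exact: prob_mu.
move=> pi cp; apply: (le_trans _ (cost_ge_pot _ _ _ u cp)).
have -> : \sum_(x : V) mu_alpha H w a u x * hdist H w u x = (1 - a) * Kq u.
  rewrite /Kq mulr_sumr; apply: eq_bigr => x _; rewrite mu_alphaE.
  have [->|xu] := eqVneq x u; first by rewrite hdist0 !mulr0.
  by rewrite mulr0 add0r mulrA.
apply: lerB => //.
have -> : a * hdist H w u v = mu_alpha H w a v v * hdist H w u v.
  by rewrite mu_alphaE eqxx /q eqxx !mulr0 addr0 mulr1.
apply: (le_sum_term (F := fun y => mu_alpha H w a v y * hdist H w u y)).
move=> y; rewrite mulr_ge0 ?hdist_ge0 //; exact: ((prob_mu _ v a0 a1).1 y).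
Qed.

Lemma fk_mono u v a b : u != v -> 0 <= a -> a <= b -> b < 1 -> fk u v a <= fk u v b.
Proof.
move=> uv a0 ab b1.
have d0 := hdist_gt0 uv; set d := hdist H w u v in d0 *.
have A0 : 0 < 1 - a by rewrite subr_gt0; apply: le_lt_trans b1.
have B0 : 0 < 1 - b by rewrite subr_gt0.
set t := (1 - b) / (1 - a).
have t0 : 0 <= t by rewrite divr_ge0 // ltW.
have t1 : t <= 1 by rewrite ler_pdivrMr // mul1r lerB.
have eb : b = t * a + (1 - t) * 1.
  rewrite /t; field; exact: lt0r_neq0.
have hc := gw_convex u v a 1 t a0 (le_trans ab (ltW b1)) ler01 (lexx 1) t0 t1.
rewrite -eb gw1 -/d in hc.
have h1 : gw u v b / d <= t * (gw u v a / d) + (1 - t).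
  have -> : t * (gw u v a / d) + (1 - t) = (t * gw u v a + (1 - t) * d) / d.
    field; exact: lt0r_neq0.
  by apply: ler_wpM2r => //; rewrite invr_ge0 ltW.
rewrite /fk /kappa_alpha -/(gw u v a) -/(gw u v b) -/d.
have h2 : t * (1 - gw u v a / d) <= 1 - gw u v b / d.
  move: h1; lra.
have -> : (1 - gw u v a / d) / (1 - a) = t * (1 - gw u v a / d) / (1 - b).
  by rewrite /t; field; rewrite !lt0r_neq0.
by apply: ler_wpM2r => //; rewrite invr_ge0 ltW.
Qed.

Lemma fk_ub u v a : u != v -> 0 <= a -> a < 1 ->
  fk u v a <= (hdist H w u v + Kq u) / hdist H w u v.
Proof.
move=> uv a0 a1.
have d0 := hdist_gt0 uv; set d := hdist H w u v in d0 *.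
have A0 : 0 < 1 - a by rewrite subr_gt0.
have hl := gw_lb u v a a0 (ltW a1); rewrite -/d in hl.
rewrite /fk /kappa_alpha -/(gw u v a) -/d.
have -> : (1 - gw u v a / d) / (1 - a) = ((d - gw u v a) / (1 - a)) / d.
  by field; rewrite !lt0r_neq0.
apply: ler_wpM2r; first by rewrite invr_ge0 ltW.
rewrite ler_pdivrMr //.
have : d - gw u v a <= (1 - a) * (d + Kq u) by move: hl; lra.
by rewrite mulrC.
Qed.

Lemma fk_cvg u v : u != v -> cvg (fk u v @ (1 : R)^'-).
Proof.
move=> uv; apply: nondecreasing_at_left_is_cvgr.
- near=> x => n m; rewrite !in_itv /= => /andP[xn n1] /andP[xm m1] nm.
  apply: fk_mono => //; apply: ltW; apply: (lt_trans _ xn).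
  by near: x; apply: nbhs_left_gt.
- near=> x; exists ((hdist H w u v + Kq u) / hdist H w u v).
  move=> r [y] yin <-; move: yin; rewrite /= in_itv /= => /andP[xy y1].
  apply: fk_ub => //; apply: ltW; apply: (lt_trans _ xy).
  by near: x; apply: nbhs_left_gt.
Unshelve. all: by end_near.
Qed.


Lemma fk_mul u v a : u != v -> a < 1 ->
  hdist H w u v * fk u v a = (hdist H w u v - gw u v a) / (1 - a).
Proof.
move=> uv a1; have d0 := hdist_gt0 uv.
rewrite /fk /kappa_alpha -/(gw u v a); field.
by rewrite !lt0r_neq0 // subr_gt0.
Qed.

Lemma key {x z y} : x != z -> z != y -> x != y ->
  hdist H w x y = hdist H w x z + hdist H w z y ->
  hdist H w x z * kappa H w x z + hdist H w z y * kappa H w z y <=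
  hdist H w x y * kappa H w x y.
Proof.
move=> xz zy xy dE; rewrite !kappaE -subr_ge0.
apply: (@cvgr_to_ge R ((1:R)^'-) _ R (fun a => hdist H w x y * fk x y a -
   (hdist H w x z * fk x z a + hdist H w z y * fk z y a))).
  apply: cvgB; first by apply: cvgMl_tmp; exact: fk_cvg.
  by apply: cvgD; apply: cvgMl_tmp; exact: fk_cvg.
near=> a.
have a0 : 0 < a by near: a; apply: nbhs_left_gt.
have a1 : a < 1 by near: a; apply: nbhs_left_lt.
rewrite !fk_mul // subr_ge0 -mulrDl; apply: ler_wpM2r.
  by rewrite invr_ge0 subr_ge0 ltW.
have := @wass_tri (mu_alpha H w a x) (mu_alpha H w a z) (mu_alpha H w a y).
rewrite -/(gw x y a) -/(gw x z a) -/(gw z y a) dE.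
have pa := prob_mu a _ (ltW a0) (ltW a1).
move=> /(_ (pa x) (pa z) (pa y)); lra.
Unshelve. all: by end_near.
Qed.

Lemma main_aux (C : R) :
  (forall u v : V, well_transported H w u v -> C <= kappa H w u v) ->
  forall t h u v, hyperpath H u v (h :: t) -> u != v ->
  sw (h :: t) = hdist H w u v -> C <= kappa H w u v.
Proof.
move=> hwt; elim=> [|h' t IH] h u v hp uv sE.
  have [_ aH uh vh] := (hyperpathP u v h [::]).1 hp.
  apply: hwt; split => //; exists h; first by move: aH => /= /andP[].
  by split => //; rewrite -sE /sw big_seq1.
have [pth aH uh vl] := (hyperpathP u v h (h' :: t)).1 hp.
move: pth => /= /andP[ehh pth'].
have [z] := set0Pn _ ehh; rewrite inE => /andP[zh zh'].
have hH : h \in H by move: aH => /= /andP[].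
have aH' : all (mem H) (h' :: t) by move: aH => /= /andP[].
have hp' : hyperpath H z v (h' :: t) by apply/(hyperpathP z v h' t).2.
have wh0 := wpos h hH.
have r0 := sw_gt0 h' t aH'.
have d1 : hdist H w u z <= w h.
  have [<-|uz] := eqVneq u z; first by rewrite hdist0 ltW.
  exact: hdist_le_w.
have d2 : hdist H w z v <= sw (h' :: t).
  have [<-|zv] := eqVneq z v; first by rewrite hdist0 ltW.
  exact: hdist_le_path.
have tri := hdist_tri u z v.
have ssum : sw (h :: h' :: t) = w h + sw (h' :: t) by rewrite /sw big_cons.
have e1 : hdist H w u z = w h by lra.
have e2 : hdist H w z v = sw (h' :: t) by lra.
have uz : u != z.
  by apply/negP => /eqP uz; move: e1; rewrite uz hdist0 => e; move: wh0; rewrite -e ltxx.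
have zv : z != v.
  by apply/negP => /eqP zv; move: e2; rewrite zv hdist0 => e; move: r0; rewrite -e ltxx.
have k1 : C <= kappa H w u z.
  by apply: hwt; split => //; exists h => //.
have k2 : C <= kappa H w z v by exact: (IH h' z v hp' zv (esym e2)).
have := key uz zv uv; rewrite -e1 -e2 in ssum.
have dE : hdist H w u v = hdist H w u z + hdist H w z v by rewrite -sE ssum.
move=> /(_ dE) K.
have d0 := hdist_gt0 uv.
rewrite -(ler_pM2l d0); apply: le_trans K.
rewrite dE mulrDl; apply: lerD; apply: ler_wpM2l => //; exact: hdist_ge0.
Qed.

End Dist.

Theorem mainTheorem3 (R : realType) (V : finType) (H : {set {set V}})
  (w : {set V} -> R) (C : R) :
  (forall h, h \in H -> 0 < w h) ->
  (forall h, h \in H -> (2 <= #|h|)%N) ->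
  hconnected H ->
  (forall u v : V, well_transported H w u v -> C <= kappa H w u v) ->
  forall x y : V, x != y -> C <= kappa H w x y.
Proof.
move=> wpos hsize hcon hwt x y xy.
have vin : forall z : V, exists2 h, h \in H & z \in h.
  move=> z; pose o := if z == x then y else x.
  have zo : z != o by rewrite /o; have [->|zx] := eqVneq z x; rewrite ?eqxx.
  have [p hp] := hcon z o zo.
  have [h [t pe]] := hyperpath_cons V H hp; subst p.
  have [_ aH zh _] := (hyperpathP V H z o h t).1 hp.
  by exists h => //; move: aH => /= /andP[].
have [p [hp sE]] := hdist_att R V H w wpos hcon xy.
have [h [t pe]] := hyperpath_cons V H hp; subst p.
exact: (main_aux R V H w wpos hcon hsize vin C hwt t h x y hp xy sE).
Qed.
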